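(* Let $T$ be a complete $L$-theory, $\phi(x,y)$ an $L$-formula and $\mathcal U$ the monster model of $T$. Identify $\phi(a,b)$ with $1$ if it holds and $0$ otherwise. Then the following are equivalent: (i) $\phi$ has NIP for $T$; (ii) for every sequence $(a_i:i<\omega)$ in $\mathcal U$ there is a subsequence $(a_{j_i}:i<\omega)$ such that for every $b\in\mathcal U$ the sequence of truth values $(\phi(a_{j_i},b):i<\omega)$ is eventually constant; (iii) for every sequence $(a_i:i<\omega)$ in $\mathcal U$ there are a subsequence $(a_{j_i}:i<\omega)$ and a natural number $N$ such that $\sum_{i=1}^\infty|\phi(a_{j_i},b)-\phi(a_{j_{i+1}},b)|\le N$ for every $b\in\mathcal U$; (iv) for every sequence $(a_i:i<\omega)$ in $\mathcal U$ there is a subsequence $(a_{j_i}:i<\omega)$ such that the sequence of functions $\phi(a_{j_i},y)$ converges pointwise to a function $f$ which is a difference of bounded semi-continuous functions.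
   Context: $\phi(x,y)$ has NIP for $T$ if there is no sequence $(a_i:i<\omega)$ in $\mathcal U$ such that for every $S\subseteq\omega$ some $b$ satisfies $\phi(a_i,b)\iff i\in S$. For a countable set $A$ of tuples, $\tilde\phi(y,x)=\phi(x,y)$ and $S_{\tilde\phi}(A)$ is the (compact, metrizable) Stone space of complete $\tilde\phi$-types over $A$, i.e. ultrafilters of the Boolean algebra generated by the formulas $\phi(a,y)$, $a\in A$; each $a\in A$ gives a continuous function $\phi(a,y):S_{\tilde\phi}(A)\to\{0,1\}$, $q\mapsto 1$ iff $\phi(a,y)\in q$. In (iv) the functions are regarded on $S_{\tilde\phi}(\{a_{j_i}:i<\omega\})$. A function is DBSC if it equals $F_1-F_2$ with $F_1,F_2$ bounded semi-continuous (upper or lower semi-continuous) functions. *)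

(* Defs.v *)
From HB Require Import structures.
From mathcomp Require Import all_boot all_order all_algebra.
From mathcomp Require Import all_classical all_reals all_analysis.

Set Implicit Arguments.
Unset Strict Implicit.
Unset Printing Implicit Defensive.

Import Order.TTheory GRing.Theory Num.Theory.

Record signature := Signature {
  fsym : Type;
  far  : fsym -> nat;
  rsym : Type;
  rar  : rsym -> nat }.

Section FOL.
Variable L : signature.

Inductive term : Type :=
| Tvar (k : nat)
| Tapp (f : fsym L) (args : 'I_(far f) -> term).

Inductive formula : Type :=
| Feq (t1 t2 : term)
| Frel (r : rsym L) (args : 'I_(rar r) -> term)
| Fnot (p : formula)
| Fand (p q : formula)
| Fex (k : nat) (p : formula).

Fixpoint tfree (k : nat) (t : term) : Prop :=
  match t with
  | Tvar j => j = k
  | Tapp f args => exists i, tfree k (args i)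
  end.

Fixpoint ffree (k : nat) (p : formula) : Prop :=
  match p with
  | Feq t1 t2 => tfree k t1 \/ tfree k t2
  | Frel r args => exists i, tfree k (args i)
  | Fnot q => ffree k q
  | Fand q1 q2 => ffree k q1 \/ ffree k q2
  | Fex j q => j <> k /\ ffree k q
  end.

Definition sentence (p : formula) : Prop := forall k, ~ ffree k p.

Record structure := Structure {
  dom :> Type;
  dom_pt : dom;
  fint : forall f : fsym L, ('I_(far f) -> dom) -> dom;
  rint : forall r : rsym L, ('I_(rar r) -> dom) -> Prop }.

Section Semantics.
Variable M : structure.

Fixpoint teval (rho : nat -> M) (t : term) : M :=
  match t with
  | Tvar k => rho k
  | Tapp f args => @fint M f (fun i => teval rho (args i))
  end.

Definition upd (rho : nat -> M) (k : nat) (m : M) : nat -> M :=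
  fun j => if j == k then m else rho j.

Fixpoint sat (rho : nat -> M) (p : formula) : Prop :=
  match p with
  | Feq t1 t2 => teval rho t1 = teval rho t2
  | Frel r args => @rint M r (fun i => teval rho (args i))
  | Fnot q => ~ sat rho q
  | Fand q1 q2 => sat rho q1 /\ sat rho q2
  | Fex k q => exists m : M, sat (upd rho k m) q
  end.

Definition holds (p : formula) : Prop := sat (fun _ => dom_pt M) p.

End Semantics.

Definition theory := formula -> Prop.

Definition is_theory (T : theory) : Prop := forall p, T p -> sentence p.

Definition is_model (M : structure) (T : theory) : Prop :=
  forall p, T p -> holds M p.

Definition complete_theory (T : theory) : Prop :=
  (exists M : structure, is_model M T) /\
  forall M N : structure, is_model M T -> is_model N T ->
    forall p, sentence p -> (holds M p <-> holds N p).

(* aleph_1-saturation: every finitely satisfiable countable set of formulas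
   (in the free variables x_0,...,x_{k-1}) with parameters from M (any
   countable set of parameters being assigned, via rho, to the other
   variables) is realized in M. *)
Definition aleph1_saturated (M : structure) : Prop :=
  forall (k : nat) (rho : nat -> M) (Sigma : nat -> formula),
    (forall N : nat, exists c : nat -> M,
        forall j, (j < N)%N ->
          sat (fun i => if (i < k)%N then c i else rho i) (Sigma j)) ->
    exists c : nat -> M,
      forall j, sat (fun i => if (i < k)%N then c i else rho i) (Sigma j).

(* phi(x, y) with x = (x_0,...,x_{n-1}), y = (x_n,...,x_{n+m-1}) *)
Definition formula_in (n m : nat) (phi : formula) : Prop :=
  forall k, ffree k phi -> (k < n + m)%N.

Definition env2 (M : structure) (n m : nat) (a : 'I_n -> M) (b : 'I_m -> M)
  : nat -> M :=
  fun i => if (insub i : option 'I_n) is Some i' then a i'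
           else if (insub (i - n)%N : option 'I_m) is Some i'' then b i''
           else dom_pt M.

Definition satxy (M : structure) (n m : nat) (phi : formula)
  (a : 'I_n -> M) (b : 'I_m -> M) : Prop :=
  sat (env2 a b) phi.

End FOL.

Arguments Tvar {L}.

Section Defs2.
Variables (L : signature) (M : structure L) (n m : nat) (phi : formula L).

Definition NIP : Prop :=
  ~ exists a : nat -> ('I_n -> M),
      forall S : set nat, exists b : 'I_m -> M,
        forall i, satxy phi (a i) b <-> S i.

Definition tv (R : realType) (a : 'I_n -> M) (b : 'I_m -> M) : R :=
  (if `[< satxy phi a b >] then 1 else 0)%R.

(* Stone space S_{phi~}(A), A = {a_k : k < omega}: a complete phi~-type q
   over A is identified with its characteristic function k |-> [phi(a_k,y) \in q]
   in the Cantor space nat -> bool (product topology); the consistent ones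
   are those all of whose finite parts are satisfiable in M. *)
Definition phi_types (a : nat -> ('I_n -> M)) : set (nat -> bool) :=
  [set q | forall N : nat, exists b : 'I_m -> M,
      forall k, (k < N)%N -> (satxy phi (a k) b <-> q k)].

End Defs2.

Definition stone_space (A : set (nat -> bool)) : topologicalType :=
  subspace (A : set cantor_space).

Definition lsc {X : topologicalType} {R : realType} (F : X -> R) : Prop :=
  lower_semicontinuous (fun x => (F x)%:E).
Definition usc {X : topologicalType} {R : realType} (F : X -> R) : Prop :=
  lower_semicontinuous (fun x => (- F x)%:E).

Definition bounded_semicontinuous {X : topologicalType} {R : realType}
  (F : X -> R) : Prop :=
  (exists B : R, forall x, `|F x| <= B)%R /\ (lsc F \/ usc F).

Definition DBSC {X : topologicalType} {R : realType} (f : X -> R) : Prop :=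
  exists F1 F2 : X -> R, bounded_semicontinuous F1 /\
    bounded_semicontinuous F2 /\ forall x, f x = (F1 x - F2 x)%R.

(* Main.v *)
Require Import Defs.
From HB Require Import structures.
From mathcomp Require Import all_boot all_order all_algebra.
From mathcomp Require Import all_classical all_reals all_analysis.
From mathcomp Require Import zify.
From mathcomp Require Import lra.
Import Order.TTheory GRing.Theory Num.Theory.
Import numFieldNormedType.Exports.
Local Open Scope classical_set_scope.
Local Open Scope ring_scope.
Set Implicit Arguments.
Unset Strict Implicit.
Unset Printing Implicit Defensive.
Section Syntax.
Variable L : signature.

Fixpoint trename (s : nat -> nat) (t : term L) : term L :=
  match t with
  | Tvar k => Tvar (s k)
  | Tapp f args => Tapp (fun i => trename s (args i))
  end.

Fixpoint frename (s : nat -> nat) (p : formula L) : formula L :=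
  match p with
  | Feq t1 t2 => Feq (trename s t1) (trename s t2)
  | Frel r args => @Frel L r (fun i => trename s (args i))
  | Fnot q => Fnot (frename s q)
  | Fand q1 q2 => Fand (frename s q1) (frename s q2)
  | Fex k q => Fex (s k) (frename s q)
  end.

Variable M : structure L.

Lemma teval_rename (rho : nat -> M) s t :
  teval rho (trename s t) = teval (rho \o s) t.
Proof.
elim: t => [k|f args IH] //=.
by congr (fint _); apply: funext => i; apply: IH.
Qed.

Lemma sat_rename s (rho : nat -> M) p : injective s ->
  sat rho (frename s p) <-> sat (rho \o s) p.
Proof.
move=> sinj; elim: p rho => [t1 t2|r args|q IH|q1 IH1 q2 IH2|k q IH] rho /=.
- by rewrite !teval_rename.
- suff -> : (fun i => teval rho (trename s (args i))) =
            (fun i => teval (rho \o s) (args i)) by [].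
  by apply: funext => i; rewrite teval_rename.
- by rewrite IH.
- by rewrite IH1 IH2.
- split=> -[x Hx]; exists x.
    have := (IH _).1 Hx.
    suff -> : (upd rho (s k) x \o s) = upd (rho \o s) k x by [].
    by apply: funext => j; rewrite /upd /= (inj_eq sinj).
  apply/IH.
  suff -> : (upd rho (s k) x \o s) = upd (rho \o s) k x by [].
  by apply: funext => j; rewrite /upd /= (inj_eq sinj).
Qed.

Lemma teval_free (rho rho' : nat -> M) t :
  (forall k, tfree k t -> rho k = rho' k) -> teval rho t = teval rho' t.
Proof.
elim: t => [k|f args IH] /= H; first by apply: H.
congr (fint _); apply: funext => i; apply: IH => k Hk.
by apply: H; exists i.
Qed.

Lemma sat_free (rho rho' : nat -> M) p :
  (forall k, ffree k p -> rho k = rho' k) -> (sat rho p <-> sat rho' p).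
Proof.
elim: p rho rho' => [t1 t2|r args|q IH|q1 IH1 q2 IH2|k q IH] rho rho' /= H.
- rewrite (@teval_free rho rho' t1); last by move=> k Hk; apply: H; left.
  rewrite (@teval_free rho rho' t2) //; by move=> k Hk; apply: H; right.
- suff -> : (fun i => teval rho (args i)) = (fun i => teval rho' (args i)) by [].
  apply: funext => i; apply: teval_free => k Hk; apply: H; by exists i.
- by rewrite (IH rho rho').
- by rewrite (IH1 rho rho') ?(IH2 rho rho') // => k Hk; apply: H; [right|left].
- split=> -[x Hx]; exists x.
    apply/(IH (upd rho k x)) => // j Hj; rewrite /upd; case: eqP => // /eqP jk.
    by apply: H; split => // E; rewrite E eqxx in jk.
  apply/(IH _ (upd rho' k x)) => // j Hj; rewrite /upd; case: eqP => // /eqP jk.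
  by apply: H; split => // E; rewrite E eqxx in jk.
Qed.

Definition Fexs (vs : seq nat) (p : formula L) := foldr (@Fex L) p vs.
Definition ovr (rho g : nat -> M) (vs : seq nat) : nat -> M :=
  fun v => if v \in vs then g v else rho v.

Lemma sat_Fexs (rho : nat -> M) vs p :
  sat rho (Fexs vs p) <-> exists g, sat (ovr rho g vs) p.
Proof.
elim: vs rho => [|v vs IH] rho /=.
  split; first by move=> H; exists rho.
  by move=> [g]; rewrite /ovr /=.
split.
  move=> [x /IH [g Hg]].
  exists (fun w => if w \in vs then g w else x).
  suff <- : ovr (upd rho v x) g vs =
     ovr rho (fun w => if w \in vs then g w else x) (v :: vs) by [].
  apply: funext => w; rewrite /ovr /upd in_cons.
  case: (boolP (w \in vs)) => wvs; first by rewrite orbT.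
  by rewrite orbF; case: eqP.
move=> [g Hg]; exists (g v); apply/IH; exists g.
suff -> : ovr (upd rho v (g v)) g vs = ovr rho g (v :: vs) by [].
apply: funext => w; rewrite /ovr /upd in_cons.
case: (boolP (w \in vs)) => wvs; first by rewrite orbT.
by rewrite orbF; case: eqP => // ->.
Qed.

Definition Ftrue : formula L := Feq (Tvar 0) (Tvar 0).
Definition Fall (ps : seq (formula L)) := foldr (@Fand L) Ftrue ps.

Lemma sat_Fall (T : eqType) (rho : nat -> M) (l : seq T) (f : T -> formula L) :
  sat rho (Fall (map f l)) <-> forall x, x \in l -> sat rho (f x).
Proof.
elim: l => [|y l IH] /=; first by split.
rewrite IH; split.
  by move=> [H1 H2] x; rewrite in_cons => /orP[/eqP->|]; [|apply: H2].
move=> H; split; first by apply: H; rewrite in_cons eqxx.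
by move=> x xl; apply: H; rewrite in_cons xl orbT.
Qed.

Definition lit (b : bool) (p : formula L) := if b then p else Fnot p.

Lemma sat_lit (rho : nat -> M) b p : sat rho (lit b p) <-> (sat rho p <-> b).
Proof. by case: b => /=; split=> // H; [apply/H| move=> /H]. Qed.

End Syntax.
Section Layout.
Variables (L : signature) (U : structure L) (n m : nat) (phi : formula L).
Hypothesis phiin : formula_in n m phi.

Definition xs (t : option nat) (i v : nat) : nat :=
  if t == Some i then (2 * v)%N else (2 * (n + m + i * n + v))%N.
Definition sig (t : option nat) (i v : nat) : nat :=
  if (v < n)%N then xs t i v else if (v < n + m)%N then (2 * v)%N else (2 * v + 1)%N.

Lemma sig_inj t i : injective (sig t i).
Proof.
move=> a b; rewrite /sig /xs; case: (t == Some i); do !case: ifP => ? ; lia.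
Qed.

Definition envX (t : option nat) (e : nat -> 'I_n -> U) (b : 'I_m -> U) (w : nat) : U :=
  let h := w./2 in
  if odd w then dom_pt U else
  if (h < n)%N then
    (if t is Some t0 then (if insub h is Some v then e t0 v else dom_pt U) else dom_pt U)
  else if (h < n + m)%N then
    (if insub (h - n)%N is Some w' then b w' else dom_pt U)
  else (if insub ((h - (n + m)) %% n)%N is Some v then e ((h - (n + m)) %/ n)%N v
        else dom_pt U).

Lemma half_double k : (2 * k)./2 = k.
Proof. by rewrite mul2n doubleK. Qed.
Lemma odd_double' k : odd (2 * k) = false.
Proof. by rewrite mul2n odd_double. Qed.

Lemma envX_xs t e b i (v : 'I_n) : envX t e b (xs t i v) = e i v.
Proof.
rewrite /envX /xs; case: eqP => [->|ti].
  by rewrite odd_double' half_double ltn_ord valK.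
have n0 : (0 < n)%N by apply: leq_ltn_trans (ltn_ord v).
rewrite odd_double' half_double ifF; last by lia.
rewrite ifF; last by lia.
have -> : (n + m + i * n + v - (n + m) = i * n + v)%N by lia.
rewrite modnMDl divnMDl // (modn_small (ltn_ord v)) (divn_small (ltn_ord v)) addn0.
by rewrite valK.
Qed.

Lemma envX_y t e b (w : 'I_m) : envX t e b (2 * (n + w)) = b w.
Proof.
rewrite /envX odd_double' half_double ifF; last by lia.
rewrite ifT; last by rewrite ltn_add2l.
by rewrite addKn valK.
Qed.

Lemma sat_copy t i (rho : nat -> U) :
  sat rho (frename (sig t i) phi) <->
  satxy phi (fun v : 'I_n => rho (xs t i v)) (fun w : 'I_m => rho (2 * (n + w))%N).
Proof.
rewrite sat_rename; last exact: sig_inj.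
apply: sat_free => k /phiin kb.
rewrite /env2 /= /sig.
case: insubP => [u un uk|].
  by rewrite -uk ltn_ord.
rewrite -ltnNge => kn.
rewrite ifF; last by lia.
case: insubP => [w wm wk|]; last by lia.
rewrite ifT; last by lia.
congr rho; have : nat_of_ord w = (k - n)%N by [].
lia.
Qed.

End Layout.
Fixpoint allbits (K : nat) : seq (seq bool) :=
  if K is K'.+1 then map (cons true) (allbits K') ++ map (cons false) (allbits K')
  else [:: [::]].

Lemma allbits_mem K (l : seq bool) : size l = K -> l \in allbits K.
Proof.
elim: K l => [|K IH] [|b l] //= [sz].
rewrite mem_cat; case: b; [apply/orP; left|apply/orP; right];
  by apply: map_f; apply: IH.
Qed.

Lemma divmod_eq (n i i' v v' : nat) : (v < n)%N -> (v' < n)%N ->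
  (i * n + v = i' * n + v')%N -> i = i'.
Proof.
move=> vn v'n E.
have n0 : (0 < n)%N by apply: leq_ltn_trans vn.
have := congr1 (fun x => x %/ n)%N E.
by rewrite /= !divnMDl // !divn_small // !addn0.
Qed.

Section Saturation.
Variables (L : signature) (U : structure L) (n m : nat) (phi : formula L).
Hypothesis phiin : formula_in n m phi.
Hypothesis Hsat : aleph1_saturated U.

Definition Shattered (K : nat) (e : nat -> 'I_n -> U) :=
  forall S : nat -> bool, exists b : 'I_m -> U,
    forall i, (i < K)%N -> (satxy phi (e i) b <-> S i).

Lemma shat_mono K K' e : (K <= K')%N -> Shattered K' e -> Shattered K e.
Proof.
move=> KK' H S; have [b Hb] := H S; exists b => i iK; apply: Hb.
exact: leq_trans iK KK'.
Qed.

Lemma shat_ext K e e' : (forall i, (i < K)%N -> e i = e' i) ->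
  Shattered K e' -> Shattered K e.
Proof.
move=> E H S; have [b Hb] := H S; exists b => i iK; rewrite E //; exact: Hb.
Qed.

Definition pt0 : 'I_m -> U := fun _ => dom_pt U.
Definition e0 : nat -> 'I_n -> U := fun _ _ => dom_pt U.

Lemma realize_y (e : nat -> 'I_n -> U) (S : nat -> bool) :
  (forall N, exists b : 'I_m -> U, forall k, (k < N)%N -> (satxy phi (e k) b <-> S k)) ->
  exists b : 'I_m -> U, forall k, (satxy phi (e k) b <-> S k).
Proof.
move=> H.
have := Hsat (k := (2 * (n + m))%N) (rho := envX None e pt0)
  (Sigma := fun j => lit (S j) (frename (sig n m None j) phi)).
set env := fun c i => if (i < 2 * (n + m))%N then c i else envX None e pt0 i.
have envx : forall c j (v : 'I_n), env c (xs n m None j v) = e j v.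
  move=> c j v; rewrite /env ifF ?envX_xs //.
  rewrite /xs /=; lia.
have envy : forall c (w : 'I_m), env c (2 * (n + w))%N = c (2 * (n + w))%N.
  move=> c w; rewrite /env ifT //; have := ltn_ord w; lia.
have key : forall c j, sat (env c) (lit (S j) (frename (sig n m None j) phi)) <->
   (satxy phi (e j) (fun w : 'I_m => c (2 * (n + w))%N) <-> S j).
  move=> c j; rewrite sat_lit sat_copy //.
  have -> : (fun v : 'I_n => env c (xs n m None j v)) = e j.
    by apply: funext => v; rewrite envx.
  have -> : (fun w : 'I_m => env c (2 * (n + w))%N) = (fun w : 'I_m => c (2 * (n + w))%N).
    by apply: funext => w; rewrite envy.
  by [].
case.
  move=> N; have [b Hb] := H N; exists (envX None e b) => j jN.
  apply/key.
  have -> : (fun w : 'I_m => envX None e b (2 * (n + w))%N) = b.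
    by apply: funext => w; rewrite envX_y.
  exact: Hb.
move=> c Hc; exists (fun w : 'I_m => c (2 * (n + w))%N) => k.
exact/key.
Qed.

Definition yv := [seq (2 * (n + w))%N | w <- iota 0 m].
Definition xv t K := [seq xs n m (Some t) i v | i <- iota t.+1 (K - t.+1), v <- iota 0 n].
Definition Inner t K (l : seq bool) :=
  Fexs yv (Fall [seq lit (nth false l i) (frename (sig n m (Some t) i) phi) | i <- iota 0 K]).
Definition Sh t K := Fexs (xv t K) (Fall [seq Inner t K l | l <- allbits K]).

Lemma xs_notin_yv t i (v : 'I_n) : xs n m t i v \notin yv.
Proof.
apply/mapP => -[w]; rewrite mem_iota => /andP[_ wm].
rewrite /xs; case: eqP => _; have := ltn_ord v; lia.
Qed.

Lemma y_in_yv (w : 'I_m) : (2 * (n + w))%N \in yv.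
Proof. by apply: map_f; rewrite mem_iota /=. Qed.

Lemma mem_xv t K i (v : 'I_n) : (xs n m (Some t) i v \in xv t K) = (t < i < K)%N.
Proof.
apply/allpairsP/idP.
  move=> [[i' v'] /= [] ]; rewrite !mem_iota /= => /andP[ti' i'K] v'n.
  rewrite /xs; case: eqP => [[<-]|ti]; case: eqP => [[ti'']|_].
  - lia.
  - have := ltn_ord v; lia.
  - lia.
  move=> E; have {}E : (i * n + v = i' * n + v')%N by lia.
  have := divmod_eq (ltn_ord v) v'n E => ->.
  apply/andP; split => //; lia.
move=> /andP[ti iK]; exists (i, nat_of_ord v); split => //=.
  rewrite mem_iota; apply/andP; split => //; lia.
by rewrite mem_iota /=.
Qed.

Lemma Inner_sem t K l (rho : nat -> U) :
  sat rho (Inner t K l) <->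
  exists b : 'I_m -> U, forall i, (i < K)%N ->
    (satxy phi (fun v : 'I_n => rho (xs n m (Some t) i v)) b <-> nth false l i).
Proof.
rewrite /Inner sat_Fexs; split.
  move=> [g /sat_Fall H]; exists (fun w : 'I_m => g (2 * (n + w))%N) => i iK.
  have /H : i \in iota 0 K by rewrite mem_iota.
  rewrite sat_lit sat_copy //.
  have -> : (fun v : 'I_n => ovr rho g yv (xs n m (Some t) i v)) =
            (fun v : 'I_n => rho (xs n m (Some t) i v)).
    by apply: funext => v; rewrite /ovr ifF //; apply/negbTE/xs_notin_yv.
  have -> : (fun w : 'I_m => ovr rho g yv (2 * (n + w))%N) =
            (fun w : 'I_m => g (2 * (n + w))%N).
    by apply: funext => w; rewrite /ovr ifT //; apply: y_in_yv.
  by [].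
move=> [b Hb]; exists (envX None e0 b); apply/sat_Fall => i.
rewrite mem_iota /= => iK.
rewrite sat_lit sat_copy //.
have -> : (fun v : 'I_n => ovr rho (envX None e0 b) yv (xs n m (Some t) i v)) =
          (fun v : 'I_n => rho (xs n m (Some t) i v)).
  by apply: funext => v; rewrite /ovr ifF //; apply/negbTE/xs_notin_yv.
have -> : (fun w : 'I_m => ovr rho (envX None e0 b) yv (2 * (n + w))%N) = b.
  by apply: funext => w; rewrite /ovr ifT ?envX_y //; apply: y_in_yv.
exact: Hb.
Qed.

Lemma Sh_sem t K (rho : nat -> U) :
  sat rho (Sh t K) <->
  exists g, Shattered K (fun i (v : 'I_n) => ovr rho g (xv t K) (xs n m (Some t) i v)).
Proof.
rewrite /Sh sat_Fexs; split.
  move=> [g /sat_Fall H]; exists g => S.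
  have /H /Inner_sem [b Hb] : [seq S i | i <- iota 0 K] \in allbits K.
    by apply: allbits_mem; rewrite size_map size_iota.
  exists b => i iK; rewrite Hb // (nth_map 0%N) ?size_iota // nth_iota //.
move=> [g Hg]; exists g; apply/sat_Fall => l _; apply/Inner_sem.
have [b Hb] := Hg (fun i => nth false l i); by exists b.
Qed.

Definition Pref (e : nat -> 'I_n -> U) (t : nat) :=
  forall K, exists e', (forall i, (i < t)%N -> e' i = e i) /\ Shattered K e'.

Lemma step_x e t : Pref e t ->
  exists x, Pref (fun i => if i == t then x else e i) t.+1.
Proof.
move=> H.
have := Hsat (k := (2 * n)%N) (rho := envX None e pt0) (Sigma := fun j => Sh t j).
set env := fun c i => if (i < 2 * n)%N then c i else envX None e pt0 i.
have envE : forall c g K i (v : 'I_n), (i < K)%N ->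
  ovr (env c) g (xv t K) (xs n m (Some t) i v) =
  if (t < i)%N then g (xs n m (Some t) i v)
  else if i == t then c (2 * v)%N else e i v.
  move=> c g K i v iK; rewrite /ovr mem_xv iK andbT.
  case: ifP => // ti; rewrite /env /xs.
  case: eqP => [[->]|ti']; first by rewrite eqxx ifT // ltn_mul2l /=.
  rewrite ifF; last by lia.
  rewrite ifF; last by apply/eqP => E; apply: ti'; rewrite E.
  have := envX_xs None e pt0 i v; rewrite /xs /= => <-.
  by [].
case.
  move=> N; have [e' [e'e Se']] := H N.
  exists (envX (Some t) e' pt0) => j jN; apply/Sh_sem.
  exists (envX (Some t) e' pt0); apply: (@shat_ext _ _ e'); last first.
    by apply: shat_mono Se'; apply: ltnW.
  move=> i ij; apply: funext => v; rewrite envE //.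
  case: ifP => ti; first by rewrite envX_xs.
  case: eqP => [->|tne].
    by have := envX_xs (Some t) e' pt0 t v; rewrite /xs eqxx.
  by rewrite e'e //; lia.
move=> c Hc; exists (fun v : 'I_n => c (2 * v)%N) => K.
have /Sh_sem [g Hg] := Hc K.
exists (fun i (v : 'I_n) => ovr (env c) g (xv t K) (xs n m (Some t) i v)); split => //.
move=> i it; apply: funext => v; rewrite /ovr mem_xv ifF; last by lia.
rewrite /env /xs.
case: eqP => [[->]|ti]; first by rewrite eqxx ifT // ltn_mul2l /=.
rewrite ifF; last by lia.
rewrite ifF; last by apply/eqP => E; apply: ti; rewrite E.
have := envX_xs None e pt0 i v; rewrite /xs /= => <-.
by [].
Qed.

Lemma infinite_shatter : (forall K, exists e, Shattered K e) ->
  exists e : nat -> 'I_n -> U, forall S : nat -> bool, exists b : 'I_m -> U,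
    forall i, (satxy phi (e i) b <-> S i).
Proof.
move=> H.
have [F HF] : {F : (nat -> 'I_n -> U) * nat -> 'I_n -> U &
   forall p, Pref p.1 p.2 -> Pref (fun i => if i == p.2 then F p else p.1 i) p.2.+1}.
  apply: (@boolp.choice _ _ (fun p x => Pref p.1 p.2 ->
     Pref (fun i => if i == p.2 then x else p.1 i) p.2.+1)) => -[e t] /=.
  case: (boolp.pselect (Pref e t)) => [/step_x [x Hx]|nP].
    by exists x.
  by exists (fun _ => dom_pt U).
pose E := fix E t := if t is t'.+1 then
   (fun i => if i == t' then F (E t', t') else E t' i) else e0.
have PE : forall t, Pref (E t) t.
  elim=> [|t IH]; last by apply: (HF (E t, t)).
  move=> K; have [e He] := H K; by exists e.
have stab : forall t i, (i < t)%N -> E t i = E i.+1 i.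
  elim=> [|t IH] i // it.
  change (E t.+1 i) with (if i == t then F (E t, t) else E t i).
  case: eqP => [->|ne].
    by change (E t.+1 t) with (if t == t then F (E t, t) else E t t); rewrite eqxx.
  apply: IH; lia.
pose einf i := E i.+1 i.
have Sinf : forall K, Shattered K einf.
  move=> K; have [e' [e'e Se']] := PE K K.
  have HH : forall i, (i < K)%N -> einf i = e' i.
    by move=> i iK; rewrite e'e // stab.
  exact: (shat_ext HH Se').
exists einf => S; apply: realize_y => N.
have [b Hb] := Sinf N S; by exists b.
Qed.

End Saturation.
Definition incr (s : nat -> nat) := forall i j, (i < j)%N -> (s i < s j)%N.

Lemma incr_step s : (forall i, (s i < s i.+1)%N) -> incr s.
Proof.
move=> H i j; elim: j => [//|j IH]; rewrite ltnS leq_eqVlt => /orP[/eqP->//|ij].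
exact: ltn_trans (IH ij) (H j).
Qed.

Lemma incr_comp s u : incr s -> incr u -> incr (s \o u).
Proof. by move=> Hs Hu i j ij; apply: Hs; apply: Hu. Qed.

Lemma incr_le s : incr s -> forall i j, (i <= j)%N -> (s i <= s j)%N.
Proof.
move=> Hs i j; rewrite leq_eqVlt => /orP[/eqP->//|ij]; exact: ltnW (Hs _ _ ij).
Qed.

Lemma incr_refl s : incr s -> forall i j, (s i < s j)%N -> (i < j)%N.
Proof.
move=> Hs i j sij; rewrite ltnNge; apply/negP => ji.
by have := incr_le Hs ji; rewrite leqNgt sij.
Qed.

Lemma incr_id : incr id. Proof. by []. Qed.
Lemma incr_succ : incr succn. Proof. by []. Qed.

Lemma incr_ge s : incr s -> forall i, (i <= s i)%N.
Proof.
move=> Hs; elim=> [//|i IH]; exact: leq_ltn_trans IH (Hs _ _ (ltnSn i)).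
Qed.

Lemma pigeon (c : nat -> bool) : exists b p, incr p /\ forall i, c (p i) = b.
Proof.
case: (boolp.pselect (exists N, forall i, (N <= i)%N -> c i = false)).
  move=> [N HN]; exists false, (fun i => N + i)%N; split.
    by move=> i j ij; rewrite ltn_add2l.
  by move=> i; apply: HN; rewrite leq_addr.
move=> nQ.
have H : forall N, exists i, (N <= i)%N /\ c i.
  move=> N; apply: boolp.contrapT => nex; apply: nQ; exists N => i Ni.
  apply/negbTE/negP => ci; apply: nex; by exists i.
have [g Hg] := boolp.choice H.
pose p := fix p i := if i is i'.+1 then g (p i').+1 else g 0%N.
exists true, p; split.
  apply: incr_step => i /=; exact: (Hg _).1.
by case=> [|i] /=; apply: (Hg _).2.
Qed.

Definition depk k (C : (nat -> nat) -> Prop) :=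
  forall f g, (forall r, (r < k)%N -> f r = g r) -> C f -> C g.

Definition cons0 (x : nat) (f : nat -> nat) : nat -> nat :=
  fun r => if r is r'.+1 then f r' else x.

Lemma ramsey k : forall C, depk k C -> exists s, incr s /\
  ((forall u, incr u -> C (s \o u)) \/ (forall u, incr u -> ~ C (s \o u))).
Proof.
elim: k => [|k IH] C HC.
  exists id; split => //.
  case: (boolp.pselect (C id)) => Cid; [left|right] => u _.
    exact: HC Cid.
  by move=> Cu; apply: Cid; apply: HC Cu.
have Cext : forall f g, (forall r, f r = g r) -> C f -> C g.
  by move=> f g E; apply: HC => r _; apply: E.
have step : forall h : nat -> nat, exists bh : bool * (nat -> nat),
   incr h -> (exists s, incr s /\ bh.2 = h \o succn \o s) /\
   (forall u, incr u -> (C (cons0 (h 0%N) (bh.2 \o u)) <-> bh.1)).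
  move=> h.
  have HCh : depk k (fun f => C (cons0 (h 0%N) (h \o succn \o f))).
    move=> f g E; apply: HC => -[|r] //= rk; rewrite E //.
  have [s [Is [Hl|Hr]]] := IH _ HCh.
    exists (true, h \o succn \o s) => Ih; split; first by exists s.
    by move=> u Iu; split => // _; apply: Hl.
  exists (false, h \o succn \o s) => Ih; split; first by exists s.
  by move=> u Iu; split => // Cu; have := Hr u Iu Cu.
have [Fb HFb] := boolp.choice step.
pose H := fix H i := if i is i'.+1 then (Fb (H i')).2 else id.
pose c i := (Fb (H i)).1.
pose x i := H i 0%N.
have IH' : forall i, incr (H i).
  elim=> [|i IHi] //=.
  have [[s [Is ->]] _] := HFb (H i) IHi.
  by apply: incr_comp; [apply: incr_comp|].
have sub : forall i j, (i < j)%N -> forall r, exists q, H j r = H i.+1 q.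
  move=> i; elim=> [//|j IHj]; rewrite ltnS leq_eqVlt => /orP[/eqP->|ij] r.
    by exists r.
  have [[s [Is E]] _] := HFb (H j) (IH' j).
  have [q Hq] := IHj ij (s r).+1.
  exists q; rewrite -Hq /=; change ((Fb (H j)).2 r = H j (s r).+1).
  by rewrite E.
have Ix : incr x.
  apply: incr_step => i.
  have [[s [Is E]] _] := HFb (H i) (IH' i).
  rewrite /x /=; change (H i 0 < (Fb (H i)).2 0)%N; rewrite E /=.
  by apply: IH'.
have key : forall i v, incr v -> (forall r, (i < v r)%N) ->
    (C (cons0 (x i) (x \o v)) <-> c i).
  move=> i v Iv iv.
  have [w Hw] := boolp.choice (fun r => sub i (v r) (iv r) 0%N).
  have Iw : incr w.
    move=> r r' rr'; apply: (incr_refl (IH' i.+1)).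
    rewrite -!Hw; exact: Ix (Iv _ _ rr').
  have [_ Hk] := HFb (H i) (IH' i).
  rewrite -(Hk w Iw); split; apply: Cext => -[|r] //=.
    by rewrite /x Hw.
  by rewrite /x Hw.
have [b [p [Ip Hp]]] := pigeon c.
exists (x \o p); split; first exact: incr_comp.
have main : forall u, incr u -> (C ((x \o p) \o u) <-> b).
  move=> u Iu.
  have Iv : incr (p \o u \o succn) by apply: incr_comp => //; apply: incr_comp.
  have := key (p (u 0%N)) (p \o u \o succn) Iv.
  rewrite Hp => <-.
    by split; apply: Cext => -[|r].
  move=> r; apply: Ip; apply: Iu => //.
case: b {Hp} main => main; [left|right] => u Iu.
  by apply/main.
by move/(main u Iu).
Qed.
Definition changes (g : nat -> bool) (M : nat) : nat := (\sum_(i < M) (g i != g i.+1))%N.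

Lemma changes_S g M : changes g M.+1 = (changes g M + (g M != g M.+1))%N.
Proof. by rewrite /changes big_ord_recr. Qed.

Lemma changes0 g : changes g 0 = 0%N.
Proof. by rewrite /changes big_ord0. Qed.

Lemma parity g M : g M = xorb (g 0%N) (odd (changes g M)).
Proof.
elim: M => [|M IH]; first by rewrite changes0 /= ?addbF; case: (g 0%N).
rewrite changes_S oddD; move: IH.
by case: (g M); case: (g M.+1); case: (g 0%N); case: (odd (changes g M)).
Qed.

Lemma extract g M : exists u : nat -> nat,
  [/\ forall r, (r < changes g M)%N -> (u r < u r.+1)%N,
      (u (changes g M) <= M)%N &
      forall r, (r <= changes g M)%N -> g (u r) = xorb (g 0%N) (odd r)].
Proof.
elim: M => [|M [u [H1 H2 H3]]].
  exists (fun _ => 0%N); rewrite changes0; split => //.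
  move=> r; rewrite leqn0 => /eqP-> /=.
  by case: (g 0%N).
rewrite changes_S; case E: (g M != g M.+1); rewrite ?addn0 ?addn1.
  exists (fun r => if r == (changes g M).+1 then M.+1 else u r); split.
  - move=> r rc; rewrite ifF; last by apply/eqP; lia.
    case: (ltngtP r (changes g M)) => rc'.
    + by rewrite ifF; [apply: H1|apply/eqP; lia].
    + lia.
    + by rewrite rc' eqxx; apply: leq_ltn_trans H2 _.
  - by rewrite eqxx.
  - move=> r; rewrite leq_eqVlt => /orP[/eqP->|rc].
      rewrite eqxx /=; have := parity g M; move: E.
      by case: (g M); case: (g M.+1); case: (g 0%N); case: (odd (changes g M)).
    by rewrite ifF; [apply: H3|apply/eqP => E2]; lia.
exists u; split => //; exact: leq_trans H2 _.
Qed.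

Lemma extract_incr g M : exists u : nat -> nat, incr u /\
  forall r, (r <= changes g M)%N -> g (u r) = xorb (g 0%N) (odd r).
Proof.
have [u [H1 H2 H3]] := extract g M.
exists (fun r => if (r <= changes g M)%N then u r else (M + r)%N); split.
  apply: incr_step => r.
  case: ifP => h1; case: ifP => h2.
  - by apply: H1.
  - have E : r = changes g M by lia.
    by rewrite E; apply: leq_ltn_trans H2 _; lia.
  - lia.
  - lia.
by move=> r rc; rewrite rc; apply: H3.
Qed.

Lemma parity_cases r : (exists2 t, r = (2 * t)%N & odd r = false) \/
                       (exists2 t, r = (2 * t).+1 & odd r = true).
Proof.
have E := odd_double_half r.
case O: (odd r); [right|left]; exists r./2 => //; move: E; rewrite O -mul2n /=; lia.
Qed.

Section Key.
Variables (L : signature) (U : structure L) (n m : nat) (phi : formula L).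
Hypothesis phiin : formula_in n m phi.
Hypothesis Hsat : aleph1_saturated U.

Lemma nip_shatter : NIP U n m phi -> exists K, forall e, ~ @Shattered L U n m phi K e.
Proof.
move=> nip; apply: boolp.contrapT => H; apply: nip.
have H' : forall K, exists e, @Shattered L U n m phi K e.
  move=> K; apply: boolp.contrapT => nE; apply: H; exists K => e Se; apply: nE.
  by exists e.
have [e He] := infinite_shatter phiin Hsat H'.
exists e => S; have [b Hb] := He (fun i => `[< S i >]); exists b => i.
by rewrite Hb; split => /asboolP.
Qed.

Definition gb (a : nat -> 'I_n -> U) (s : nat -> nat) (b : 'I_m -> U) : nat -> bool :=
  fun i => `[< satxy phi (a (s i)) b >].

Lemma nip_bounded : NIP U n m phi -> forall a : nat -> 'I_n -> U,
  exists s, incr s /\ exists N, forall b M, (changes (gb a s b) M <= N)%N.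
Proof.
move=> nip a; have [K nK] := nip_shatter nip.
pose C f := exists b : 'I_m -> U, forall r, (r < 2 * K)%N -> (satxy phi (a (f r)) b <-> odd r).
have dC : depk (2 * K) C.
  move=> f g E [b Hb]; exists b => r rK; rewrite -E //; exact: Hb.
have [s [Is [Hl|Hr]]] := ramsey dC.
  exfalso; apply: (nK (fun t => a (s (3 * t).+1))) => S.
  pose u r := (3 * r./2 + odd r + (if S r./2 then 0 else 1))%N.
  have u2 : forall t, u (2 * t)%N = (3 * t + (if S t then 0 else 1))%N.
    by move=> t; rewrite /u half_double odd_double' addn0.
  have u2' : forall t, u (2 * t).+1 = (3 * t + 1 + (if S t then 0 else 1))%N.
    move=> t; rewrite /u.
    have -> : ((2 * t).+1)./2 = t by rewrite /= mul2n uphalf_double.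
    by rewrite /= odd_double'.
  have Iu : incr u.
    apply: incr_step => r; have [[t -> _]|[t -> _]] := parity_cases r.
      by rewrite u2 u2'; lia.
    have -> : (2 * t).+2 = (2 * t.+1)%N by lia.
    by rewrite u2 u2'; case: (S t); case: (S t.+1); lia.
  have [b Hb] := Hl u Iu; exists b => t tK.
  case St: (S t).
    have := Hb (2 * t).+1; rewrite /= u2' St addn0 addn1 odd_double' /=; apply; lia.
  have := Hb (2 * t)%N; rewrite /= u2 St odd_double' addn1; apply; lia.
exists s; split => //; exists (2 * K)%N => b M.
rewrite leqNgt; apply/negP => cM.
have [u [Iu Hu]] := extract_incr (gb a s b) M.
case g0: (gb a s b 0%N) in Hu.
  apply: (Hr (u \o succn)); first exact: incr_comp.
  exists b => r rK /=.
  have := Hu r.+1 => E.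
  have {}E : gb a s b (u r.+1) = odd r.
    by rewrite E /=; [case: (odd r)|lia].
  by rewrite -E /gb; split => /asboolP.
apply: (Hr u) => //; exists b => r rK /=.
have := Hu r => E.
have {}E : gb a s b (u r) = odd r by rewrite E; [case: (odd r)|lia].
by rewrite -E /gb; split => /asboolP.
Qed.

End Key.
Lemma sum_mono (h : nat -> nat) k k' : (k <= k')%N ->
  (\sum_(i < k) h i <= \sum_(i < k') h i)%N.
Proof.
elim: k' => [|k' IH]; first by rewrite leqn0 => /eqP->.
rewrite leq_eqVlt => /orP[/eqP->//|]; rewrite ltnS => kk.
by rewrite big_ord_recr /=; apply: leq_trans (IH kk) _; apply: leq_addr.
Qed.

Lemma sum_stab (h : nat -> nat) K k : (forall i, (K <= i)%N -> h i = 0%N) ->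
  (K <= k)%N -> (\sum_(i < k) h i = \sum_(i < K) h i)%N.
Proof.
move=> H; elim: k => [|k IH]; first by rewrite leqn0 => /eqP->.
rewrite leq_eqVlt => /orP[/eqP->//|]; rewrite ltnS => Kk.
by rewrite big_ord_recr /= (H k Kk) (IH Kk) addn0.
Qed.

Lemma changes_mono g M i : (M <= i)%N -> (changes g M <= changes g i)%N.
Proof. exact: (sum_mono (fun i => nat_of_bool (g i != g i.+1))). Qed.

Lemma changes_diff g M i : (M <= i)%N -> g i != g M -> (changes g M < changes g i)%N.
Proof.
elim: i => [|i IH]; first by rewrite leqn0 => /eqP->; rewrite eqxx.
rewrite leq_eqVlt => /orP[/eqP->|]; first by rewrite eqxx.
rewrite ltnS => Mi ne; rewrite changes_S.
case E: (g i == g M).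
  move/eqP: E => E; rewrite -E eq_sym in ne; rewrite ne addn1 ltnS.
  exact: changes_mono.
by apply: leq_trans (IH Mi _) _; [rewrite E|apply: leq_addr].
Qed.

Lemma eventually_const g N : (forall M, (changes g M <= N)%N) ->
  exists K, forall i, (K <= i)%N -> g i = g K.
Proof.
move=> HN; apply: boolp.contrapT => H.
have H' : forall K, exists i, (K <= i)%N /\ g i != g K.
  move=> K; apply: boolp.contrapT => nE; apply: H; exists K => i Ki.
  apply/eqP; apply/negP => ne; apply: nE; exists i; split => //.
  by apply/negP.
have big : forall c, exists M, (c <= changes g M)%N.
  elim=> [|c [M HM]]; first by exists 0%N.
  have [i [Mi ne]] := H' M; exists i.
  exact: leq_ltn_trans HM (changes_diff Mi ne).
have [M HM] := big N.+1.
by have := leq_trans HM (HN M); rewrite ltnn.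
Qed.

Lemma incr_inj s : incr s -> injective s.
Proof.
move=> Is i j E; case: (ltngtP i j) => // ij; have := Is _ _ ij; rewrite E ltnn //.
Qed.

Lemma asb_eq (P : Prop) (c : bool) : (P <-> c) -> `[< P >] = c.
Proof.
case: c => H; first by apply/asboolP; apply/H.
by apply/negbTE/negP => /asboolP /H.
Qed.

Definition ups (q : nat -> bool) k := (\sum_(i < k) (~~ q i && q i.+1))%N.
Definition downs (q : nat -> bool) k := (\sum_(i < k) (q i && ~~ q i.+1))%N.

Lemma updown (q : nat -> bool) k :
  (nat_of_bool (q k) + downs q k = nat_of_bool (q 0%N) + ups q k)%N.
Proof.
elim: k => [|k IH]; first by rewrite /downs /ups !big_ord0.
rewrite /downs /ups !big_ord_recr /= -/(downs q k) -/(ups q k).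
move: IH; case: (q k); case: (q k.+1) => /=; lia.
Qed.

Lemma ups_le (q : nat -> bool) k : (ups q k <= changes q k)%N.
Proof. by apply: leq_sum => i _; case: (q i); case: (q i.+1). Qed.
Lemma downs_le (q : nat -> bool) k : (downs q k <= changes q k)%N.
Proof. by apply: leq_sum => i _; case: (q i); case: (q i.+1). Qed.

Definition Mx (B : nat) (G : nat -> nat) : nat :=
  (\max_(v < B | `[< exists k, (v <= G k)%N >]) v)%N.

Lemma Mx_val B G V : (V < B)%N -> (exists k, (V <= G k)%N) -> (forall k, (G k <= V)%N) ->
  Mx B G = V.
Proof.
move=> VB [k Vk] GV; apply/eqP; rewrite eqn_leq; apply/andP; split.
  apply/bigmax_leqP => v /asboolP [k' vk']; exact: leq_trans vk' (GV k').
have := @leq_bigmax_cond _ (fun v : 'I_B => `[< exists k, (v <= G k)%N >])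
  (fun v => nat_of_ord v) (Ordinal VB).
by apply; apply/asboolP; exists k.
Qed.

Lemma Mx_le B G : (Mx B G <= B)%N.
Proof. by apply/bigmax_leqP => v _; apply: ltnW. Qed.

Lemma nbhs_coord (x : cantor_space) i : nbhs x [set y : cantor_space | y i = x i].
Proof.
have := @proj_continuous nat (fun _ => bool) i x.
move=> /(_ [set x i]); apply.
rewrite /= nbhs_principalE. by apply/principal_filterP.
Qed.

Lemma nbhs_prefix (x : cantor_space) K :
  nbhs x [set y : cantor_space | forall i, (i < K)%N -> y i = x i].
Proof.
elim: K => [|K IH]; first by apply: filterS filterT.
apply: filterS (filterI IH (nbhs_coord x K)) => y [H1 H2] i.
rewrite ltnS leq_eqVlt => /orP[/eqP->//|]; exact: H1.
Qed.

Lemma nbhs_to_sub (A : set cantor_space) (x : cantor_space) (V : set cantor_space) :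
  nbhs x V -> @nbhs _ (stone_space A) x V.
Proof.
move=> xV; rewrite /stone_space; case: (@nbhs_subspaceP _ A x) => Ax.
  by apply: filterS xV => y Vy _.
by move=> y ->; apply: nbhs_singleton xV.
Qed.

Lemma lsc_Mx (R : realType) (A : set cantor_space) B (G : cantor_space -> nat -> nat) :
  (forall k, exists K, forall x y : cantor_space,
     (forall i, (i < K)%N -> x i = y i) -> G x k = G y k) ->
  @lsc (stone_space A) R (fun x => ((Mx B (G x))%:R : R)).
Proof.
move=> loc x a ax.
have [K HK] : exists K, forall y : cantor_space,
    (forall i, (i < K)%N -> y i = x i) -> (Mx B (G x) <= Mx B (G y))%N.
  case: (pickP (fun v : 'I_B => `[< exists k, (v <= G x k)%N >])) => [v0 Pv0|none].
    have cA : (0 < #|(fun v : 'I_B => `[< exists k, (v <= G x k)%N >])|)%N.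
      by apply/card_gt0P; exists v0.
    have [v Pv Ev] := @eq_bigmax_cond _ (fun v : 'I_B => `[< exists k, (v <= G x k)%N >])
      (fun v => nat_of_ord v) cA.
    move: (Pv) => /asboolP [k vk].
    have [K HK] := loc k; exists K => y xy.
    rewrite /Mx Ev; apply: leq_bigmax_cond; apply/asboolP; exists k.
    by rewrite (HK y x) // => i iK; rewrite xy.
  exists 0%N => y _; rewrite /Mx big_pred0 //.
exists [set y : cantor_space | forall i, (i < K)%N -> y i = x i].
  exact/nbhs_to_sub/nbhs_prefix.
move=> y /HK xy; apply: lt_le_trans ax _.
by rewrite lee_fin ler_nat.
Qed.
Lemma sum1_le (d : nat -> nat) k :
  (\sum_(1 <= i < k) d i <= \sum_(i < k) d i)%N.
Proof.
case: k => [|k]; first by rewrite big_geq.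
rewrite -(big_mkord xpredT d) (@big_ltn _ _ _ 0 k.+1) //=.
exact: leq_addl.
Qed.

Lemma changes_le1 (d : nat -> bool) k :
  (changes d k <= 1 + \sum_(1 <= i < k) (nat_of_bool (d i != d i.+1)))%N.
Proof.
case: k => [|k]; first by rewrite changes0.
rewrite /changes -(big_mkord xpredT (fun i => nat_of_bool (d i != d i.+1))).
by rewrite (@big_ltn _ _ _ 0 k.+1) //= leq_add2r leq_b1.
Qed.

Theorem proposition2p13 (L : signature) (T : theory L) (U : structure L)
    (n m : nat) (phi : formula L) (R : realType) :
  is_theory T -> complete_theory T ->
  is_model U T -> aleph1_saturated U ->
  formula_in n m phi ->
  [<-> NIP U n m phi;
    forall a : nat -> ('I_n -> U),
      exists j : nat -> nat, {homo j : p q / (p < q)%N} /\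
        forall b : 'I_m -> U, exists N : nat, forall i : nat, (N <= i)%N ->
          (satxy phi (a (j i)) b <-> satxy phi (a (j N)) b);
    forall a : nat -> ('I_n -> U),
      exists j : nat -> nat, {homo j : p q / (p < q)%N} /\
        exists N : nat, forall b : 'I_m -> U,
          (\sum_(1 <= i <oo)
             ((`| tv phi R (a (j i)) b - tv phi R (a (j i.+1)) b |)%R)%:E
           <= (N%:R)%:E)%E;
    forall a : nat -> ('I_n -> U),
      exists j : nat -> nat, {homo j : p q / (p < q)%N} /\
        exists f : stone_space (phi_types m phi (fun i => a (j i))) -> R,
          (forall q : nat -> bool, phi_types m phi (fun i => a (j i)) q ->
             (fun i : nat => ((q i)%:R : R)) @ \oo --> f q) /\
          DBSC f].
Proof.
move=> _ _ _ Hsat phiin.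
have tv_abs : forall (a : nat -> 'I_n -> U) (s : nat -> nat) (b : 'I_m -> U) (i : nat),
    `|tv phi R (a (s i)) b - tv phi R (a (s i.+1)) b| =
    ((nat_of_bool (gb phi a s b i != gb phi a s b i.+1))%:R : R).
  move=> a s b i; rewrite /tv /gb.
  case: `[< satxy phi (a (s i)) b >]; case: `[< satxy phi (a (s i.+1)) b >] => /=;
  by rewrite ?subrr ?normr0 ?subr0 ?sub0r ?normrN ?normr1.
have psum : forall (a : nat -> 'I_n -> U) (s : nat -> nat) (b : 'I_m -> U) (k : nat),
    (\sum_(1 <= i < k) (`|tv phi R (a (s i)) b - tv phi R (a (s i.+1)) b|)%:E)%E =
    (((\sum_(1 <= i < k) nat_of_bool (gb phi a s b i != gb phi a s b i.+1))%N)%:R)%:E.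
  move=> a s b k; rewrite sumEFin natr_sum; congr (_%:E).
  apply: eq_bigr => i _; exact: tv_abs.
have nonneg : forall (a : nat -> 'I_n -> U) (s : nat -> nat) (b : 'I_m -> U) (i : nat), (0%R <= (`|tv phi R (a (s i)) b - tv phi R (a (s i.+1)) b|)%:E)%E.
  by move=> *; rewrite lee_fin normr_ge0.
have shat_odd : forall (a : nat -> 'I_n -> U) (j : nat -> nat), incr j ->
    (forall S : set nat, exists b : 'I_m -> U, forall i, satxy phi (a i) b <-> S i) ->
    exists b : 'I_m -> U, forall r, satxy phi (a (j r)) b <-> odd r.
  move=> a j Ij Ha; have [b Hb] := Ha [set i | exists r, i = j r /\ odd r].
  exists b => r; rewrite Hb; split => [[r' [E O]]|O]; last by exists r.
  by rewrite (incr_inj Ij E).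
have P02 : NIP U n m phi -> forall a : nat -> ('I_n -> U),
      exists j : nat -> nat, {homo j : p q / (p < q)%N} /\
        exists N : nat, forall b : 'I_m -> U,
          (\sum_(1 <= i <oo)
             ((`| tv phi R (a (j i)) b - tv phi R (a (j i.+1)) b |)%R)%:E
           <= (N%:R)%:E)%E.
  move=> nip a; have [s [Is [N HN]]] := nip_bounded phiin Hsat nip a.
  exists s; split => //; exists N => b.
  apply: lime_le; first by apply: (is_cvg_nneseries (P := xpredT)) => *; rewrite lee_fin normr_ge0.
  apply: nearW => k; rewrite psum lee_fin ler_nat.
  apply: leq_trans (sum1_le _ _) (HN b k).
have P21 : (forall a : nat -> ('I_n -> U),
      exists j : nat -> nat, {homo j : p q / (p < q)%N} /\
        exists N : nat, forall b : 'I_m -> U,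
          (\sum_(1 <= i <oo)
             ((`| tv phi R (a (j i)) b - tv phi R (a (j i.+1)) b |)%R)%:E
           <= (N%:R)%:E)%E) ->
    forall a : nat -> ('I_n -> U),
      exists j : nat -> nat, {homo j : p q / (p < q)%N} /\
        forall b : 'I_m -> U, exists N : nat, forall i : nat, (N <= i)%N ->
          (satxy phi (a (j i)) b <-> satxy phi (a (j N)) b).
  move=> H a; have [j [Ij [N HN]]] := H a; exists j; split => // b.
  have HM : forall M, (changes (gb phi a j b) M <= N.+1)%N.
    move=> M; apply: leq_trans (changes_le1 _ _) _; rewrite add1n ltnS.
    have := le_trans (nneseries_lim_ge M (fun n _ _ => nonneg a j b n)) (HN b).
    by rewrite psum lee_fin ler_nat.
  have [K HK] := eventually_const HM; exists K => i Ki.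
  have := HK i Ki; rewrite /gb => E.
  by split => h; apply/asboolP; [rewrite -E|rewrite E]; apply/asboolP.
have P10 : (forall a : nat -> ('I_n -> U),
      exists j : nat -> nat, {homo j : p q / (p < q)%N} /\
        forall b : 'I_m -> U, exists N : nat, forall i : nat, (N <= i)%N ->
          (satxy phi (a (j i)) b <-> satxy phi (a (j N)) b)) -> NIP U n m phi.
  move=> H [a Ha]; have [j [Ij Hj]] := H a.
  have [b Hb] := shat_odd a j Ij Ha.
  have [N HN] := Hj b.
  move: (HN N.+1 (leqnSn N)); rewrite !Hb /=.
  by case: (odd N) => -[h1 h2]; [have := h2 isT|have := h1 isT].
have P03 : NIP U n m phi -> forall a : nat -> ('I_n -> U),
      exists j : nat -> nat, {homo j : p q / (p < q)%N} /\
        exists f : stone_space (phi_types m phi (fun i => a (j i))) -> R,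
          (forall q : nat -> bool, phi_types m phi (fun i => a (j i)) q ->
             (fun i : nat => ((q i)%:R : R)) @ \oo --> f q) /\
          DBSC f.
  move=> nip a; have [s [Is [N HN]]] := nip_bounded phiin Hsat nip a.
  exists s; split => //.
  have Ach : forall q, phi_types m phi (fun i => a (s i)) q -> forall M, (changes q M <= N)%N.
    move=> q Aq M; have [b Hb] := Aq M.+1.
    have -> : changes q M = changes (gb phi a s b) M.
      apply: eq_bigr => i _; rewrite /gb (asb_eq (Hb i _)) ?(asb_eq (Hb i.+1 _)) //.
        by have := ltn_ord i; lia.
      by have := ltn_ord i; lia.
    exact: HN.
  pose F1 (q : cantor_space) := ((Mx N.+2 (fun k => nat_of_bool (q 0%N) + ups q k)%N)%:R : R).
  pose F2 (q : cantor_space) := ((Mx N.+1 (downs q))%:R : R).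
  exists (fun q => F1 q - F2 q); split.
    move=> q Aq; have [K HK] := eventually_const (Ach q Aq).
    have z : forall h : nat -> bool, (forall i, (K <= i)%N -> h i = false) ->
        forall k, (\sum_(i < k) nat_of_bool (h i) <= \sum_(i < K) nat_of_bool (h i))%N.
      move=> h Hh k; rewrite -(@sum_stab (fun i => nat_of_bool (h i)) K (maxn k K)).
      - exact: (sum_mono (fun i => nat_of_bool (h i)) (leq_maxl k K)).
      - by move=> i Ki; rewrite Hh.
      - by apply: leq_maxr.
    have qi : forall i, (K <= i)%N -> q i = q i.+1.
      by move=> i Ki; rewrite HK // HK //; lia.
    have E1 : Mx N.+2 (fun k => nat_of_bool (q 0%N) + ups q k)%N =
              (nat_of_bool (q 0%N) + ups q K)%N.
      apply: Mx_val.
      - have := leq_trans (ups_le q K) (Ach q Aq K); case: (q 0%N) => /=; lia.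
      - by exists K.
      - move=> k; rewrite leq_add2l; apply: (z (fun i => ~~ q i && q i.+1)) => i Ki.
        rewrite (qi i Ki).
        by case: (q i.+1).
    have E2 : Mx N.+1 (downs q) = downs q K.
      apply: Mx_val.
      - by rewrite ltnS; apply: leq_trans (downs_le q K) (Ach q Aq K).
      - by exists K.
      - move=> k; apply: (z (fun i => q i && ~~ q i.+1)) => i Ki; rewrite (qi i Ki).
        by case: (q i.+1).
    apply: cvg_near_cst; apply: filterS (nbhs_infty_ge K) => i Ki.
    rewrite /F1 /F2 E1 E2 (HK i Ki) -updown natrD addrK.
    by [].
  exists F1, F2; split; last split => //.
    split.
      by exists (N.+2)%:R => x; rewrite /F1 normr_nat ler_nat Mx_le.
    left; apply: (@lsc_Mx R _ N.+2 (fun q k => nat_of_bool (q 0%N) + ups q k)%N).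
    move=> k; exists k.+1 => x y Hxy; rewrite Hxy // /ups; congr (_ + _)%N.
    apply: eq_bigr => i _; rewrite !Hxy //; have := ltn_ord i; lia.
  split.
    by exists (N.+1)%:R => x; rewrite /F2 normr_nat ler_nat Mx_le.
  left; apply: (@lsc_Mx R _ N.+1 (fun q k => downs q k)).
  move=> k; exists k.+1 => x y Hxy; rewrite /downs.
  apply: eq_bigr => i _; rewrite !Hxy //; have := ltn_ord i; lia.
have P30 : (forall a : nat -> ('I_n -> U),
      exists j : nat -> nat, {homo j : p q / (p < q)%N} /\
        exists f : stone_space (phi_types m phi (fun i => a (j i))) -> R,
          (forall q : nat -> bool, phi_types m phi (fun i => a (j i)) q ->
             (fun i : nat => ((q i)%:R : R)) @ \oo --> f q) /\
          DBSC f) -> NIP U n m phi.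
  move=> H [a Ha]; have [j [Ij [f [Hf _]]]] := H a.
  have [b Hb] := shat_odd a j Ij Ha.
  have Aq : phi_types m phi (fun i => a (j i)) (fun i => odd i).
    by move=> M; exists b => k _; apply: Hb.
  have := Hf _ Aq => /cvgr_dist_lt /(_ (1/2) _).
  have h0 : (0 : R) < 1/2 by rewrite divr_gt0 ?ltr01 ?ltr0n.
  move=> /(_ h0) [K _ HK].
  have hK := HK K (leqnn K); have hK1 := HK K.+1 (leqnSn K).
  move: hK hK1 => /=; rewrite !ltr_norml.
  case: (odd K) => /= /andP[h1 h2] /andP[h3 h4].
  - have : (1 : R) < 1 by lra.
    by rewrite ltxx.
  - have : (1 : R) < 1 by lra.
    by rewrite ltxx.
tfae.
- by move=> h; apply: P21; apply: P02.
- by move=> h; apply: P02; apply: P10.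
- by move=> h; apply: P03; apply: P10; apply: P21.
- exact: P30.
Qed.
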